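(* Let $F\in\mathbb{C}^{n\times n}$ be an orthonormal (unitary) matrix such that every entry satisfies $|F_{ij}|\le\alpha/\sqrt{n}$ for an absolute constant $\alpha$. Then there is a constant $c>0$ depending only on $\alpha$ such that if $t\le c\,n/k$, the matrix $M=[F^{-1}\;\; I]\in\mathbb{C}^{n\times 2n}$ satisfies the $((3k,3t),\delta)$-RIP with $\delta\le 0.1$; that is, for every $v=\begin{bmatrix}\hat{x}\\ e\end{bmatrix}\in\mathbb{C}^{2n}$ with $\hat{x}\in\mathbb{C}^n$ $3k$-sparse and $e\in\mathbb{C}^n$ $3t$-sparse, $$(1-\delta)\|v\|\le\|Mv\|\le(1+\delta)\|v\|.$$
   Context: $\|\cdot\|$ denotes the Euclidean norm. A vector is $k$-sparse if it has at most $k$ nonzero entries. $I$ is the $n\times n$ identity matrix and $Mv=F^{-1}\hat{x}+e$. *)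

(* Defs.v *)
From mathcomp Require Import all_boot all_order all_algebra.
From mathcomp Require Import complex reals.
Set Implicit Arguments. Unset Strict Implicit. Unset Printing Implicit Defensive.
Import Order.TTheory GRing.Theory Num.Theory.
Local Open Scope ring_scope.

Definition cmod (R : realType) (z : R[i]) : R :=
  Num.sqrt (complex.Re z ^+ 2 + complex.Im z ^+ 2).

Definition vnorm (R : realType) (n : nat) (v : 'cV[R[i]]_n) : R :=
  Num.sqrt (\sum_(i < n) cmod (v i ord0) ^+ 2).

Definition ctrmx (R : realType) (n : nat) (A : 'M[R[i]]_n) : 'M[R[i]]_n :=
  (map_mx (@conjc R) A)^T.

Definition unitary (R : realType) (n : nat) (F : 'M[R[i]]_n) : Prop :=
  F *m ctrmx F = 1%:M.

Definition sparse (R : realType) (n : nat) (s : nat) (v : 'cV[R[i]]_n) : Prop :=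
  (#|[set i : 'I_n | v i ord0 != 0%R]| <= s)%N.

(* Main.v *)
Require Import Defs.
From mathcomp Require Import all_boot all_order all_algebra.
From mathcomp Require Import complex reals.
From mathcomp Require Import ring lra.
Import Order.TTheory GRing.Theory Num.Theory.
Local Open Scope ring_scope.

Section H.
Set Implicit Arguments. Unset Strict Implicit.
Local Open Scope complex_scope.
Local Open Scope ring_scope.
Variable R : realType.
Implicit Types z w : R[i].

Lemma cmodE z : cmod z = Normc.normc z. Proof. by case: z. Qed.
Lemma cmod_ge0 z : 0 <= cmod z. Proof. exact: sqrtr_ge0. Qed.
Lemma cmod0 : cmod (0 : R[i]) = 0.
Proof. by rewrite cmodE Normc.normc0. Qed.
Lemma cmodM z w : cmod (z * w) = cmod z * cmod w.
Proof. by rewrite !cmodE Normc.normcM. Qed.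
Lemma cmodD z w : cmod (z + w) <= cmod z + cmod w.
Proof. by rewrite !cmodE le_normcD. Qed.
Lemma cmodJ z : cmod (conjc z) = cmod z.
Proof. by case: z => a b; rewrite /cmod /= sqrrN. Qed.
Lemma cmod_sqr z : cmod z ^+ 2 = complex.Re z ^+ 2 + complex.Im z ^+ 2.
Proof. by rewrite sqr_sqrtr // addr_ge0 // sqr_ge0. Qed.
Lemma conjcM_sqr z : conjc z * z = (cmod z ^+ 2)%:C.
Proof.
rewrite cmod_sqr; case: z => a b /=; apply/eqP; rewrite eq_complex /=.
apply/andP; split; apply/eqP; ring.
Qed.
Lemma normRe z : `|complex.Re z| <= cmod z.
Proof.
rewrite -sqrtr_sqr /cmod ler_sqrt; last by rewrite addr_ge0 // sqr_ge0.
by rewrite lerDl sqr_ge0.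
Qed.
Lemma cmod_sum (I : Type) (r : seq I) (P : pred I) (f : I -> R[i]) :
  cmod (\sum_(i <- r | P i) f i) <= \sum_(i <- r | P i) cmod (f i).
Proof.
apply: (big_ind2 (fun x y => cmod x <= y)); first by rewrite cmod0.
  by move=> x1 x2 y1 y2 h1 h2; apply: le_trans (cmodD _ _) (lerD h1 h2).
by move=> i _; apply: lexx.
Qed.

Lemma CS (I : finType) (P : pred I) (a : I -> R) :
  (\sum_(i | P i) a i) ^+ 2 <= #|P|%:R * \sum_(i | P i) a i ^+ 2.
Proof.
rewrite expr2 mulr_suml.
under eq_bigr do rewrite mulr_sumr.
have E : #|P|%:R * \sum_(i | P i) a i ^+ 2 = \sum_(i | P i) \sum_(j | P j) a j ^+ 2.
  by rewrite sumr_const mulr_natl.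
have E2 : #|P|%:R * \sum_(i | P i) a i ^+ 2 = \sum_(i | P i) \sum_(j | P j) a i ^+ 2.
  by rewrite mulr_sumr; apply: eq_bigr => i _; rewrite sumr_const mulr_natl.
rewrite -(@ler_pM2l _ 2) // -[2]/(1+1) [X in _ <= X]mulrDl mul1r {1}E E2 -big_split /=.
rewrite mulr_sumr ler_sum // => i _; rewrite -big_split mulr_sumr ler_sum //= => j _.
have := sqr_ge0 (a i - a j); rewrite sqrrB; lra.
Qed.

Definition sq n (v : 'cV[R[i]]_n) : R := \sum_i cmod (v i ord0) ^+ 2.
Definition l1 n (v : 'cV[R[i]]_n) : R := \sum_i cmod (v i ord0).
Definition dot n (a b : 'cV[R[i]]_n) : R :=
  \sum_i complex.Re (conjc (a i ord0) * b i ord0).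

Lemma sq_ge0 n (v : 'cV[R[i]]_n) : 0 <= sq v.
Proof. by apply: sumr_ge0 => i _; rewrite sqr_ge0. Qed.
Lemma l1_ge0 n (v : 'cV[R[i]]_n) : 0 <= l1 v.
Proof. by apply: sumr_ge0 => i _; rewrite cmod_ge0. Qed.

Lemma l1_sparse n s (v : 'cV[R[i]]_n) : sparse s v -> l1 v ^+ 2 <= s%:R * sq v.
Proof.
rewrite /sparse; set A := [set i | _] => hA.
have -> : l1 v = \sum_(i | i \in A) cmod (v i ord0).
  rewrite /l1 (bigID (fun i => i \in A)) /= [X in _ + X]big1 ?addr0 //.
  by move=> i; rewrite inE negbK => /eqP ->; rewrite cmod0.
have -> : sq v = \sum_(i | i \in A) cmod (v i ord0) ^+ 2.
  rewrite /sq (bigID (fun i => i \in A)) /= [X in _ + X]big1 ?addr0 //.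
  by move=> i; rewrite inE negbK => /eqP ->; rewrite cmod0 expr0n.
apply: le_trans (CS _ _) _.
apply: ler_wpM2r; first by apply: sumr_ge0 => i _; rewrite sqr_ge0.
by rewrite ler_nat.
Qed.

Lemma sq_col n (x e : 'cV[R[i]]_n) : sq (col_mx x e) = sq x + sq e.
Proof.
rewrite /sq big_split_ord /=; congr (_ + _); apply: eq_bigr => i _.
  by rewrite col_mxEu.
by rewrite col_mxEd.
Qed.

Lemma sqC n (v : 'cV[R[i]]_n) : (sq v)%:C = ((map_mx conjc v)^T *m v) ord0 ord0.
Proof.
rewrite mxE rmorph_sum; apply: eq_bigr => i _.
by rewrite !mxE conjcM_sqr.
Qed.

Lemma sq_unitary n (G : 'M[R[i]]_n) x : ctrmx G *m G = 1%:M -> sq (G *m x) = sq x.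
Proof.
move=> hG; apply: complexI; rewrite !sqC map_mxM trmx_mul -mulmxA.
by rewrite (mulmxA (map_mx _ G)^T) -/(ctrmx G) hG mul1mx.
Qed.

Lemma sq_add n (a b : 'cV[R[i]]_n) : sq (a + b) = sq a + sq b + 2 * dot a b.
Proof.
rewrite /sq /dot mulr_sumr -!big_split /=; apply: eq_bigr => i _.
rewrite !mxE !cmod_sqr; case: (a i ord0) => u1 u2; case: (b i ord0) => w1 w2 /=.
ring.
Qed.

Lemma dot_bound n (a b : 'cV[R[i]]_n) :
  `|dot a b| <= \sum_i cmod (a i ord0) * cmod (b i ord0).
Proof.
apply: le_trans (ler_norm_sum _ _ _) _; apply: ler_sum => i _.
by apply: le_trans (normRe _) _; rewrite cmodM cmodJ.
Qed.

Lemma entry_bound n (G : 'M[R[i]]_n) x beta :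
  (forall i j, cmod (G i j) <= beta) ->
  forall i, cmod ((G *m x) i ord0) <= beta * l1 x.
Proof.
move=> hG i; rewrite mxE; apply: le_trans (cmod_sum _ _ _) _.
rewrite /l1 mulr_sumr; apply: ler_sum => j _; rewrite cmodM.
by apply: ler_wpM2r; [exact: cmod_ge0 | exact: hG].
Qed.

Lemma sqrt_scale (a S : R) : 0 <= a -> 0 <= S ->
  a * Num.sqrt S = Num.sqrt (a ^+ 2 * S).
Proof.
by move=> ha hS; rewrite sqrtrM ?sqr_ge0 // sqrtr_sqr ger0_norm.
Qed.

End H.

Theorem lemma2 (R : realType) (alpha : R) :
  exists c : R, 0 < c /\
  forall (n : nat) (F : 'M[R[i]]_n),
    unitary F ->
    (forall i j, cmod (F i j) <= alpha / Num.sqrt (n%:R)) ->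
    forall k t : nat, t%:R <= c * n%:R / k%:R ->
    forall (xh e : 'cV[R[i]]_n),
      sparse (3 * k) xh -> sparse (3 * t) e ->
      let M : 'M[R[i]]_(n, n + n) := row_mx (invmx F) 1%:M in
      let v : 'cV[R[i]]_(n + n) := col_mx xh e in
      (1 - 1/10) * vnorm v <= vnorm (M *m v) /\
      vnorm (M *m v) <= (1 + 1/10) * vnorm v.
Proof.
have ha1 : 0 < alpha ^+ 2 + 1 by rewrite ltr_pwDr ?sqr_ge0.
exists (1 / (400 * (alpha ^+ 2 + 1))); split.
  by rewrite divr_gt0 // mulr_gt0.
set c := 1 / _.
move=> n F hU hF k t hkt xh e hx he M v.
set G := invmx F.
have hGinv : G = ctrmx F.
  have [hFu _] := mulmx1_unit hU.
  by rewrite -[RHS](mulKmx hFu) hU mulmx1.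
have hGG : ctrmx G *m G = 1%:M.
  rewrite hGinv -[RHS]hU; congr (_ *m _).
  by apply/matrixP => i j; rewrite !mxE conjcK.
have hMv : M *m v = G *m xh + e by rewrite mul_row_col mul1mx.
set beta := alpha / Num.sqrt n%:R.
have hGb : forall i j, cmod (G i j) <= beta.
  by move=> i j; rewrite hGinv !mxE cmodJ.
have hs : sq (M *m v) = sq xh + sq e + 2 * dot (G *m xh) e.
  by rewrite hMv sq_add sq_unitary.
have hv : sq v = sq xh + sq e by rewrite sq_col.
set d := dot (G *m xh) e.
have hd : `|d| <= beta * l1 xh * l1 e.
  apply: le_trans (dot_bound _ _) _.
  rewrite /l1 mulr_sumr; apply: ler_sum => i _.
  by apply: ler_wpM2r; [exact: cmod_ge0 | exact: entry_bound].
have hd2 : d ^+ 2 <= (beta * l1 xh * l1 e) ^+ 2.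
  set B := beta * _ * _ in hd *.
  have h1 := ler_norm d; have h2 : - d <= `|d| by rewrite -normrN ler_norm.
  have hp : 0 <= (B - d) * (B + d) by apply: mulr_ge0; lra.
  have e1 : (B - d) * (B + d) = B ^+ 2 - d ^+ 2 by ring.
  by rewrite e1 subr_ge0 in hp.
have hb2 : beta ^+ 2 = alpha ^+ 2 / n%:R.
  by rewrite /beta exprMn exprVn sqr_sqrtr ?ler0n.
have hlx := l1_sparse hx; have hle := l1_sparse he.
have hq : beta ^+ 2 * (3 * k)%:R * (3 * t)%:R <= 9 / 400.
  rewrite hb2 !natrM.
  have [->|kn0] := eqVneq k 0%N.
    by rewrite mulr0 mulr0 mul0r; lra.
  have [->|nn0] := eqVneq n 0%N.
    by rewrite invr0 mulr0 !mul0r; lra.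
  have hK : 0 < k%:R :> R by rewrite ltr0n lt0n.
  have hN : 0 < n%:R :> R by rewrite ltr0n lt0n.
  move: hkt; rewrite ler_pdivlMr // => hkt.
  have hX : t%:R * k%:R / n%:R <= c by rewrite ler_pdivrMr.
  have hc : alpha ^+ 2 * c <= 1 / 400.
    rewrite /c mulrA mulr1 ler_pdivrMr ?mulr_gt0 //. lra.
  have -> : alpha ^+ 2 / n%:R * (3 * k%:R) * (3 * t%:R) = 9 * (alpha ^+ 2 * (t%:R * k%:R / n%:R)).
    by field; rewrite gt_eqF.
  have ha : 0 <= alpha ^+ 2 by rewrite sqr_ge0.
  have := ler_wpM2l ha hX. lra.
have hB : (beta * l1 xh * l1 e) ^+ 2 <= (9 / 400) * sq xh * sq e.
  have h1 : l1 xh ^+ 2 * l1 e ^+ 2 <= (3 * k)%:R * sq xh * ((3 * t)%:R * sq e).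
    by apply: ler_pM; rewrite ?sqr_ge0.
  have e0 : (beta * l1 xh * l1 e) ^+ 2 = beta ^+ 2 * (l1 xh ^+ 2 * l1 e ^+ 2) by ring.
  rewrite e0; apply: (le_trans (ler_wpM2l (sqr_ge0 beta) h1)).
  have e2 : beta ^+ 2 * ((3 * k)%:R * sq xh * ((3 * t)%:R * sq e)) =
    (beta ^+ 2 * (3 * k)%:R * (3 * t)%:R) * (sq xh * sq e) by ring.
  rewrite e2 -[X in _ <= X]mulrA; apply: ler_wpM2r => //.
  by apply: mulr_ge0; apply: sq_ge0.
have hsx := sq_ge0 xh; have hse := sq_ge0 e.
have hdd : d ^+ 2 <= ((3 / 40) * (sq xh + sq e)) ^+ 2.
  apply: (le_trans hd2); apply: (le_trans hB).
  have := sqr_ge0 (sq xh - sq e). rewrite sqrrB exprMn. lra.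
have hy : 0 <= (3 / 40) * (sq xh + sq e) by lra.
set y := (3 / 40) * _ in hdd hy.
have hdl : - y <= d.
  case: (lerP (- y) d) => // hlt.
  have hp : 0 < (- d - y) * (- d + y) by apply: mulr_gt0; lra.
  have e3 : (- d - y) * (- d + y) = d ^+ 2 - y ^+ 2 by ring.
  by rewrite e3 subr_gt0 in hp; move: hp; rewrite ltNge hdd.
have hdu : d <= y.
  case: (lerP d y) => // hlt.
  have hp : 0 < (d - y) * (d + y) by apply: mulr_gt0; lra.
  have e3 : (d - y) * (d + y) = d ^+ 2 - y ^+ 2 by ring.
  by rewrite e3 subr_gt0 in hp; move: hp; rewrite ltNge hdd.
have E1 : vnorm v = Num.sqrt (sq v) by [].
have E2 : vnorm (M *m v) = Num.sqrt (sq (M *m v)) by [].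
rewrite E1 E2 hs hv -/d; rewrite /y in hdl hdu.
have hS : 0 <= sq xh + sq e by lra.
split.
  rewrite sqrt_scale //; last by lra.
  rewrite ler_sqrt; last by lra.
  have -> : (1 - 1 / 10) ^+ 2 = 81 / 100 :> R by field.
  lra.
rewrite sqrt_scale //; last by lra.
rewrite ler_sqrt; last by apply: mulr_ge0; [apply: sqr_ge0 | lra].
have -> : (1 + 1 / 10) ^+ 2 = 121 / 100 :> R by field.
lra.
Qed.
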